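(* There exist instances (users, nonnegative embedding weights, features, and a linear graph-based classifier) of the myopic best-response dynamics described below, a user $i$, and a round $t$ such that $\hat y_i^{(t)}=-1$, user $i$ does not move (i.e., $x_i^{(t+1)}=x_i^{(t)}$), yet $\hat y_i^{(t+1)}=+1$.
   Context: Users $i\in[n]$ have features $x_i\in\mathbb{R}^\ell$; embeddings $\phi(x_i;x_{-i})=\widetilde{w}_{ii}x_i+\sum_{j\neq i}\widetilde{w}_{ji}x_j$ with $\widetilde{w}_{ji}\ge0$. Classifier: $h_{\theta,b}(x_i;x_{-i})=\mathrm{sign}(\theta^\top\phi(x_i;x_{-i})+b)$, $\mathrm{sign}(0)=+1$. Cost $c(x,x')=\|x-x'\|_2$. Dynamics: $x_i^{(0)}=x_i$; at each round all users update concurrently; user $i$ changes her features only if she is currently classified $-1$ and some $x'$ with $h(x';x^{(t)}_{-i})=+1$ has $c(x_i^{(t)},x')\le2$, in which case she moves to the minimum-cost such point (embedding exactly on the decision boundary); otherwise she stays. Predictions: $\hat y_i^{(t)}=h(x_i^{(t)};x_{-i}^{(t)})$. *)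

(* Defs.v *)
From HB Require Import structures.
From mathcomp Require Import all_boot all_order all_algebra.
Set Implicit Arguments. Unset Strict Implicit. Unset Printing Implicit Defensive.
Import Order.TTheory GRing.Theory Num.Theory.
Local Open Scope ring_scope.

Section Dynamics.
Variable R : rcfType.

Definition dot (l : nat) (u v : 'rV[R]_l) : R := \sum_(k < l) u 0 k * v 0 k.

Definition cost (l : nat) (x y : 'rV[R]_l) : R :=
  Num.sqrt (\sum_(k < l) (x 0 k - y 0 k) ^+ 2).

(* w j i stands for the weight \tilde w_{ji}.
   embed w X i x' = \tilde w_{ii} x' + sum_{j<>i} \tilde w_{ji} X_j. *)
Definition embed (n l : nat) (w : 'I_n -> 'I_n -> R) (X : 'I_n -> 'rV[R]_l)
  (i : 'I_n) (x' : 'rV[R]_l) : 'rV[R]_l :=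
  w i i *: x' + \sum_(j < n | j != i) w j i *: X j.

Definition classify (n l : nat) (w : 'I_n -> 'I_n -> R) (theta : 'rV[R]_l) (b : R)
  (X : 'I_n -> 'rV[R]_l) (i : 'I_n) (x' : 'rV[R]_l) : int :=
  if 0 <= dot theta (embed w X i x') + b then 1 else -1.

Definition best_response (n l : nat) (w : 'I_n -> 'I_n -> R) (theta : 'rV[R]_l) (b : R)
  (X : 'I_n -> 'rV[R]_l) (i : 'I_n) (y : 'rV[R]_l) : Prop :=
  let moves := classify w theta b X i (X i) = -1 /\
               exists x', classify w theta b X i x' = 1 /\ cost (X i) x' <= 2 in
  (moves -> classify w theta b X i y = 1 /\
            forall x', classify w theta b X i x' = 1 -> cost (X i) y <= cost (X i) x')
  /\ (~ moves -> y = X i).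

Definition step (n l : nat) (w : 'I_n -> 'I_n -> R) (theta : 'rV[R]_l) (b : R)
  (X X' : 'I_n -> 'rV[R]_l) : Prop :=
  forall i, best_response w theta b X i (X' i).

Definition trajectory (n l : nat) (w : 'I_n -> 'I_n -> R) (theta : 'rV[R]_l) (b : R)
  (x0 : 'I_n -> 'rV[R]_l) (traj : nat -> 'I_n -> 'rV[R]_l) : Prop :=
  traj 0%N = x0 /\ forall t, step w theta b (traj t) (traj t.+1).

Definition prediction (n l : nat) (w : 'I_n -> 'I_n -> R) (theta : 'rV[R]_l) (b : R)
  (traj : nat -> 'I_n -> 'rV[R]_l) (t : nat) (i : 'I_n) : int :=
  classify w theta b (traj t) i (traj t i).

End Dynamics.

(* Main.v *)
Require Import Defs.
From HB Require Import structures.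
From mathcomp Require Import all_boot all_order all_algebra.
From mathcomp Require Import lra.
Import Order.TTheory GRing.Theory Num.Theory.
Local Open Scope ring_scope.

Section Ex.
Variable R : rcfType.
Definition W : 'I_2 -> 'I_2 -> R := fun j k => if j == ord_max then 1 else 0.
Definition TH : 'rV[R]_1 := const_mx 1.
Definition c (a : R) : 'rV[R]_1 := const_mx a.
Definition X0 : 'I_2 -> 'rV[R]_1 := fun j => if j == ord_max then c (-1) else c 0.
Definition X1 : 'I_2 -> 'rV[R]_1 := fun j => c 0.
Definition TR : nat -> 'I_2 -> 'rV[R]_1 := fun t => if t is 0%N then X0 else X1.

Lemma E0 X x' : dot TH (embed W X ord0 x') = X ord_max 0 0.
Proof.
rewrite /dot big_ord1 /embed !mxE summxE big_mkcond !big_ord_recr big_ord0 /=.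
by rewrite !mxE /W /= !mul1r !mul0r !add0r.
Qed.

Lemma E1 X x' : dot TH (embed W X ord_max x') = x' 0 0.
Proof.
rewrite /dot big_ord1 /embed !mxE summxE big_mkcond !big_ord_recr big_ord0 /=.
by rewrite !mxE /W /= !mul1r !mul0r !add0r !addr0.
Qed.

Lemma C0 X x' : classify W TH 0 X ord0 x' = if 0 <= X ord_max 0 0 then 1 else -1.
Proof. by rewrite /classify E0 addr0. Qed.

Lemma C1 X x' : classify W TH 0 X ord_max x' = if 0 <= x' 0 0 then 1 else -1.
Proof. by rewrite /classify E1 addr0. Qed.

Lemma costE (x y : 'rV[R]_1) : cost x y = Num.sqrt ((x 0 0 - y 0 0) ^+ 2).
Proof. by rewrite /cost big_ord1. Qed.

Lemma ord2 (i : 'I_2) : i = ord0 \/ i = ord_max.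
Proof. by case: i => [[|[|]]] //= H; [left|right]; apply/val_inj. Qed.

Lemma step0 : step W TH 0 X0 X1.
Proof.
move=> i; case: (ord2 i) => ->; split.
- move=> [_ [x' [H _]]]; move: H; rewrite C0 /X0 /= mxE.
  by rewrite lerNr oppr0 ler10.
- by move=> _; rewrite /X0 /X1.
- move=> _; split; first by rewrite C1 mxE lexx.
  move=> x'; rewrite C1; case: ifP => // Hx _.
  rewrite !costE /X0 /X1 eqxx !mxE subr0 ler_sqrt ?sqr_ge0 //.
  rewrite !expr2; nra.
- move=> Hn; exfalso; apply: Hn; split.
    by rewrite C1 /X0 eqxx mxE lerNr oppr0 ler10.
  exists (c 0); split; first by rewrite C1 mxE lexx.
  rewrite costE /X0 eqxx !mxE subr0 sqrrN expr1n sqrtr1 ler1n //.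
Qed.

Lemma step1 : step W TH 0 X1 X1.
Proof.
move=> i; case: (ord2 i) => ->; split.
- by move=> [H _]; move: H; rewrite C0 /X1 mxE lexx.
- by [].
- by move=> [H _]; move: H; rewrite C1 /X1 mxE lexx.
- by [].
Qed.
End Ex.

Theorem proposition2 (R : rcfType) :
  exists (n l : nat) (w : 'I_n -> 'I_n -> R) (theta : 'rV[R]_l) (b : R)
         (x0 : 'I_n -> 'rV[R]_l) (traj : nat -> 'I_n -> 'rV[R]_l)
         (i : 'I_n) (t : nat),
    (forall j k : 'I_n, 0 <= w j k) /\
    trajectory w theta b x0 traj /\
    prediction w theta b traj t i = -1 /\
    traj t.+1 i = traj t i /\
    prediction w theta b traj t.+1 i = 1.
Proof.
exists 2%N, 1%N, (@W R), (TH R), 0, (X0 R), (@TR R), ord0, 0%N.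
split; first by move=> j k; rewrite /W; case: ifP.
split; first by split => // [[|t]] /=; [exact: step0|exact: step1].
rewrite /prediction /= C0 C0 /X0 /X1 /= !mxE lexx; split.
  by rewrite lerNr oppr0 ler10.
by [].
Qed.
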